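(* Let $\gamma>1$, let $\bar\rho$ and $d$ be as in the context with $\phi$ sufficiently smooth, and let $i\ge1$ be an integer. Then for every sufficiently smooth $X:[0,1]\to\mathbb R$, $$\mathcal D_iL_0X=\mathcal L_i\mathcal D_iX+\sum_{j=0}^{i-1}q_{ij}\,\mathcal D_{i-j}X,\qquad q_{ij}=\sum_{k=1}^{2+j}\frac{\sum_{\ell=0}^{k}c_{ijk\ell}\,\partial_r^\ell d}{r^{2+j-k}},$$ for some functions $c_{ijk\ell}$ that are bounded on $[0,1]$.
   Context: $\phi\in C^k[0,1]$ with $\phi>0$ and $\phi'(0)=0$; $\bar\rho:=\phi$ and $d(r):=\bar\rho(r)^{-\gamma}\int_r^1\ell\bar\rho(\ell)\,d\ell$. $D_rf=r^{-2}\partial_r(r^2f)$; $\mathcal D_0=\mathrm{id}$, $\mathcal D_j=(\partial_rD_r)^{j/2}$ for $j$ even and $\mathcal D_j=D_r(\partial_rD_r)^{(j-1)/2}$ for $j$ odd. For $m\ge0$: $L_mf=\frac{1}{\bar\rho^{1+m(\gamma-1)}d^m}\partial_r\big(\bar\rho^{\gamma+m(\gamma-1)}d^{1+m}D_rf\big)$ and $L_m^*h=\frac{1}{\bar\rho^{1+m(\gamma-1)}d^m}D_r\big(\bar\rho^{\gamma+m(\gamma-1)}d^{1+m}\partial_rh\big)$. Then $\mathcal L_j\mathcal D_j:=L_j\mathcal D_j$ if $j$ is even and $\mathcal L_j\mathcal D_j:=L_j^*\mathcal D_j$ if $j$ is odd. *)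

(* Defs.v *)
From Stdlib Require Import Reals.
From Coquelicot Require Import Coquelicot.
Open Scope R_scope.

(* A function in C^N[0,1] is represented by a C^N extension to R
   (every C^N[0,1] function has one); only values on [0,1] matter below. *)
Definition Ck (N : nat) (f : R -> R) : Prop :=
  (forall n x, (n <= N)%nat -> ex_derive_n f n x) /\
  (forall x, continuous (Derive_n f N) x).

Definition rhobar (phi : R -> R) : R -> R := phi.

Definition dfun (gamma : R) (phi : R -> R) (r : R) : R :=
  Rpower (rhobar phi r) (- gamma) * RInt (fun l => l * rhobar phi l) r 1.

Definition Dr (f : R -> R) : R -> R :=
  fun r => / (r ^ 2) * Derive (fun s => s ^ 2 * f s) r.

Definition dDr (f : R -> R) : R -> R := Derive (Dr f).

Definition calD (j : nat) (f : R -> R) : R -> R :=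
  if Nat.even j then Nat.iter (Nat.div j 2) dDr f
  else Dr (Nat.iter (Nat.div (j - 1) 2) dDr f).

Definition Lm (m : nat) (gamma : R) (phi : R -> R) (f : R -> R) : R -> R :=
  fun r => / (Rpower (rhobar phi r) (1 + INR m * (gamma - 1)) * (dfun gamma phi r) ^ m)
    * Derive (fun s => Rpower (rhobar phi s) (gamma + INR m * (gamma - 1))
                        * (dfun gamma phi s) ^ (1 + m) * Dr f s) r.

Definition Lmstar (m : nat) (gamma : R) (phi : R -> R) (h : R -> R) : R -> R :=
  fun r => / (Rpower (rhobar phi r) (1 + INR m * (gamma - 1)) * (dfun gamma phi r) ^ m)
    * Dr (fun s => Rpower (rhobar phi s) (gamma + INR m * (gamma - 1))
                    * (dfun gamma phi s) ^ (1 + m) * Derive h s) r.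

Definition calLD (j : nat) (gamma : R) (phi : R -> R) (f : R -> R) : R -> R :=
  if Nat.even j then Lm j gamma phi (calD j f) else Lmstar j gamma phi (calD j f).

Definition qij (c : nat -> nat -> nat -> nat -> R -> R) (gamma : R) (phi : R -> R)
  (i j : nat) (r : R) : R :=
  sum_n_m (fun k =>
      sum_n_m (fun l => c i j k l r * Derive_n (dfun gamma phi) l r) 0 k
      / r ^ (2 + j - k)) 1 (2 + j).

(* Main.v *)
Require Import Defs.
From Stdlib Require Import Reals.
From Coquelicot Require Import Coquelicot.
From Stdlib Require Import Lra Lia.
Open Scope R_scope.


Lemma loc_int (a b x : R) : a < x < b -> locally x (fun t => a < t < b).
Proof.
  intros [H1 H2].
  assert (He : 0 < Rmin (x - a) (b - x)) by (apply Rmin_case; lra).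
  exists (mkposreal _ He). intros t Ht.
  change (Rabs (t - x) < Rmin (x - a) (b - x)) in Ht.
  apply Rabs_lt_between in Ht.
  pose proof (Rmin_l (x-a) (b-x)). pose proof (Rmin_r (x-a) (b-x)). lra.
Qed.

Lemma cont_mult (f g : R -> R) x : continuous f x -> continuous g x ->
  continuous (fun y => f y * g y) x.
Proof. intros; apply (continuous_mult f g); auto. Qed.
Lemma cont_plus (f g : R -> R) x : continuous f x -> continuous g x ->
  continuous (fun y => f y + g y) x.
Proof. intros; apply (continuous_plus f g); auto. Qed.

Fixpoint sm (a b : R) (k : nat) (f : R -> R) : Prop :=
  match k with
  | O => forall x, a < x < b -> continuous f x
  | S k => (forall x, a < x < b -> ex_derive f x) /\ sm a b k (Derive f)
  end.

Lemma sm_ext a b k : forall f g, (forall x, a < x < b -> f x = g x) -> sm a b k f -> sm a b k g.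
Proof.
  induction k as [|k IH]; simpl; intros f g E H.
  - intros x Hx. apply (continuous_ext_loc g f x).
    + generalize (loc_int a b x Hx); apply filter_imp; intros t Ht; auto.
    + auto.
  - destruct H as [H1 H2]. split.
    + intros x Hx. apply (ex_derive_ext_loc f g); auto.
      generalize (loc_int a b x Hx); apply filter_imp; intros t Ht; auto.
    + apply (IH (Derive f)); auto. intros x Hx. apply Derive_ext_loc.
      generalize (loc_int a b x Hx); apply filter_imp; intros t Ht; auto.
Qed.

Lemma sm_S a b k : forall f, sm a b (S k) f -> sm a b k f.
Proof.
  induction k as [|k IH]; simpl; intros f [H1 H2].
  - intros x Hx; apply (ex_derive_continuous (K:=R_AbsRing) (V:=R_NormedModule)); auto.
  - split; auto.
Qed.

Lemma sm_le a b k k' f : (k <= k')%nat -> sm a b k' f -> sm a b k f.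
Proof. induction 1; auto. intros Hs; apply IHle, sm_S; auto. Qed.

Lemma sm_sub a b a' b' k : a <= a' -> b' <= b -> forall f, sm a b k f -> sm a' b' k f.
Proof.
  intros Ha Hb; induction k as [|k IH]; simpl; intros f H.
  - intros x Hx; apply H; lra.
  - destruct H as [H1 H2]; split; auto. intros x Hx; apply H1; lra.
Qed.

Lemma sm_D a b k f : sm a b (S k) f -> sm a b k (Derive f).
Proof. simpl; tauto. Qed.

Lemma sm_ex a b k f x : sm a b (S k) f -> a < x < b -> ex_derive f x.
Proof. simpl; intros [H _]; auto. Qed.

Lemma sm_cont a b k f x : sm a b k f -> a < x < b -> continuous f x.
Proof. intros H Hx. apply (sm_le a b 0 k) in H; [|lia]. apply H; auto. Qed.

Lemma sm_const a b k c : sm a b k (fun _ => c).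
Proof.
  revert c; induction k; simpl; intros c.
  - intros; apply continuous_const.
  - split. intros; apply ex_derive_const.
    apply (sm_ext _ _ _ (fun _ => 0)); auto. intros; rewrite Derive_const; auto.
Qed.

Lemma sm_plus a b k : forall f g, sm a b k f -> sm a b k g -> sm a b k (fun x => f x + g x).
Proof.
  induction k as [|k IH]; simpl; intros f g Hf Hg.
  - intros; apply cont_plus; auto.
  - destruct Hf as [F1 F2]; destruct Hg as [G1 G2]; split.
    + intros; apply (ex_derive_plus f g); auto.
    + apply (sm_ext _ _ _ (fun x => Derive f x + Derive g x)); auto.
      intros; rewrite Derive_plus; auto.
Qed.

Lemma sm_mult a b k : forall f g, sm a b k f -> sm a b k g -> sm a b k (fun x => f x * g x).
Proof.
  induction k as [|k IH]; intros f g Hf Hg.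
  - simpl in *; intros; apply cont_mult; auto.
  - pose proof (sm_S _ _ _ _ Hf) as Hf'. pose proof (sm_S _ _ _ _ Hg) as Hg'.
    simpl in Hf, Hg. destruct Hf as [F1 F2]; destruct Hg as [G1 G2]; split.
    + intros; apply ex_derive_mult; auto.
    + apply (sm_ext _ _ _ (fun x => Derive f x * g x + f x * Derive g x)).
      intros; rewrite Derive_mult; auto.
      apply sm_plus; apply IH; auto.
Qed.

Lemma sm_scal a b k c f : sm a b k f -> sm a b k (fun x => c * f x).
Proof. intros; apply sm_mult; auto; apply sm_const. Qed.

Lemma sm_id a b k : sm a b k (fun x => x).
Proof.
  destruct k; simpl.
  - intros; apply continuous_id.
  - split. intros; apply ex_derive_id.
    apply (sm_ext _ _ _ (fun _ => 1)). intros; symmetry; apply (Derive_id x). apply sm_const.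
Qed.

Lemma sm_inv a b k : forall f, (forall x, a < x < b -> f x <> 0) -> sm a b k f -> sm a b k (fun x => / f x).
Proof.
  induction k as [|k IH]; intros f Hn Hf.
  - simpl in *; intros x Hx.
    apply (continuous_comp f Rinv). auto.
    apply continuity_pt_filterlim. apply continuity_pt_inv; auto. apply derivable_continuous_pt, derivable_pt_id.
  - pose proof (sm_S _ _ _ _ Hf) as Hf'. simpl in Hf. destruct Hf as [F1 F2]; split.
    + intros; apply ex_derive_inv; auto.
    + apply (sm_ext _ _ _ (fun x => - Derive f x * (/ f x * / f x))).
      intros x Hx; rewrite Derive_inv; auto. field. auto.
      apply sm_mult. apply (sm_ext _ _ _ (fun x => (-1) * Derive f x)). intros; ring.
      apply sm_scal; auto. apply sm_mult; apply IH; auto.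
Qed.

Lemma sm_pow a b k f n : sm a b k f -> sm a b k (fun x => f x ^ n).
Proof.
  intros H; induction n; simpl. apply sm_const. apply sm_mult; auto.
Qed.


Lemma Derive_sq x : Derive (fun s => s ^ 2) x = 2 * x.
Proof. rewrite (Derive_pow (fun s => s)). rewrite Derive_id. simpl; ring. apply ex_derive_id. Qed.

Lemma ex_derive_sq x : ex_derive (fun s : R => s ^ 2) x.
Proof. apply (ex_derive_pow (fun s => s)), ex_derive_id. Qed.

Lemma Dr_eq f x : ex_derive f x -> x <> 0 -> Dr f x = Derive f x + 2 / x * f x.
Proof.
  intros Hf Hx; unfold Dr. rewrite (Derive_mult (fun s => s ^ 2) f); auto.
  rewrite Derive_sq. field. auto. apply ex_derive_sq.
Qed.


Lemma Dr_ext_loc f g x : locally x (fun t => f t = g t) -> Dr f x = Dr g x.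
Proof.
  intros H; unfold Dr. f_equal. apply Derive_ext_loc.
  apply (filter_imp (fun t => f t = g t)); auto. intros t ->; auto.
Qed.

Lemma Dr_mult F g x : ex_derive F x -> ex_derive g x -> x <> 0 ->
  Dr (fun s => F s * g s) x = Derive F x * g x + F x * Dr g x.
Proof.
  intros HF Hg Hx. rewrite Dr_eq; auto. rewrite Dr_eq; auto.
  rewrite Derive_mult; auto. ring. apply ex_derive_mult; auto.
Qed.

Lemma Dr_plus F g x : ex_derive F x -> ex_derive g x -> x <> 0 ->
  Dr (fun s => F s + g s) x = Dr F x + Dr g x.
Proof.
  intros HF Hg Hx. rewrite !Dr_eq; auto. rewrite Derive_plus; auto. ring.
  apply (ex_derive_plus F g); auto.
Qed.

Lemma sm_Dr a k f : 0 <= a -> forall b, sm a b (S k) f -> sm a b k (Dr f).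
Proof.
  intros Ha b H. apply (sm_ext _ _ _ (fun x => Derive f x + 2 * (/ x) * f x)).
  intros x Hx. rewrite Dr_eq. field. lra. eapply sm_ex; eauto. lra.
  apply sm_plus. apply sm_D; auto. apply sm_mult. apply sm_scal.
  apply sm_inv. intros; lra. apply sm_id. apply sm_S; auto.
Qed.

Lemma calD_even p f : calD (2 * p) f = Nat.iter p dDr f.
Proof.
  unfold calD. replace (Nat.even (2 * p)) with true.
  rewrite Nat.mul_comm, Nat.div_mul; auto.
  symmetry; apply Nat.even_spec. exists p; auto.
Qed.

Lemma calD_odd p f : calD (S (2 * p)) f = Dr (Nat.iter p dDr f).
Proof.
  unfold calD. replace (Nat.even (S (2 * p))) with false.
  replace (S (2 * p) - 1)%nat with (p * 2)%nat by lia.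
  rewrite Nat.div_mul; auto.
  rewrite Nat.even_succ. symmetry. apply Bool.negb_true_iff.
  rewrite Nat.negb_odd. apply Nat.even_spec. exists p; auto.
Qed.

Lemma calD_S m f : calD (S m) f = if Nat.even m then Dr (calD m f) else Derive (calD m f).
Proof.
  destruct (Nat.Even_or_Odd m) as [[p ->]|[p ->]].
  - replace (Nat.even (2 * p)) with true. rewrite calD_odd, calD_even; auto.
    symmetry; apply Nat.even_spec. exists p; auto.
  - replace (Nat.even (2 * p + 1)) with false.
    replace (S (2 * p + 1)) with (2 * S p)%nat by lia. rewrite calD_even.
    replace (2 * p + 1)%nat with (S (2 * p)) by lia. rewrite calD_odd. reflexivity.
    replace (2 * p + 1)%nat with (S (2 * p)) by lia.
    rewrite Nat.even_succ. symmetry. apply Bool.negb_true_iff.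
    rewrite Nat.negb_odd. apply Nat.even_spec. exists p; auto.
Qed.

Lemma sm_calD b m : forall k f, sm 0 b (m + k) f -> sm 0 b k (calD m f).
Proof.
  induction m as [|m IH]; intros k f H.
  - exact H.
  - rewrite calD_S. replace (S m + k)%nat with (m + S k)%nat in H by lia.
    apply IH in H. destruct (Nat.even m).
    + apply sm_Dr; auto. lra.
    + apply sm_D; auto.
Qed.

Fixpoint sumf (n : nat) (F : nat -> R) : R :=
  match n with O => 0 | S n => sumf n F + F n end.

Lemma sumf_ext n F G : (forall j, (j < n)%nat -> F j = G j) -> sumf n F = sumf n G.
Proof.
  induction n; simpl; intros H; auto. rewrite IHn, H; auto.
Qed.

Lemma sumf_plus n F G : sumf n (fun j => F j + G j) = sumf n F + sumf n G.
Proof. induction n; simpl; [ring|rewrite IHn; ring]. Qed.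

Lemma sumf_shift n F : sumf (S n) F = F O + sumf n (fun j => F (S j)).
Proof. induction n; simpl in *; [ring|]. rewrite IHn; ring. Qed.

Lemma sumf_Derive n (T : nat -> R -> R) x :
  (forall j, (j < n)%nat -> ex_derive (T j) x) ->
  ex_derive (fun s => sumf n (fun j => T j s)) x /\
  Derive (fun s => sumf n (fun j => T j s)) x = sumf n (fun j => Derive (T j) x).
Proof.
  induction n; simpl; intros H.
  - split. apply ex_derive_const. apply Derive_const.
  - assert (H' : forall j, (j < n)%nat -> ex_derive (T j) x) by (intros; apply H; lia).
    destruct (IHn H') as [E D].
    split. apply (ex_derive_plus (fun s => sumf n (fun j => T j s)) (T n)); auto.
    rewrite (Derive_plus (fun s => sumf n (fun j => T j s)) (T n)); auto. f_equal; exact D.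
Qed.

Lemma sumf_Dr n (T : nat -> R -> R) x : x <> 0 ->
  (forall j, (j < n)%nat -> ex_derive (T j) x) ->
  Dr (fun s => sumf n (fun j => T j s)) x = sumf n (fun j => Dr (T j) x).
Proof.
  intros Hx H. destruct (sumf_Derive n T x H) as [E D].
  rewrite Dr_eq; auto. rewrite D.
  induction n; simpl. ring.
  rewrite <- IHn. rewrite (Dr_eq (T n)); auto. ring.
  intros; apply H; lia. apply sumf_Derive; intros; apply H; lia.
  apply sumf_Derive; intros; apply H; lia.
Qed.

Lemma sum_n_m_sumf n F : sum_n_m F 0 n = sumf (S n) F.
Proof.
  induction n. rewrite sum_n_n. simpl. rewrite Rplus_0_l. reflexivity.
  rewrite sum_n_Sm; [|lia]. rewrite IHn. reflexivity.
Qed.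


Definition Ifun (phi : R -> R) x := RInt (fun l => l * phi l) x 1.
Definition wf phi x := Ifun phi x / phi x.
Definition vf phi (m : nat) x := - x + INR m * Derive (wf phi) x.

Lemma I_deriv (phi : R -> R) : (forall x, continuous phi x) ->
  forall x, is_derive (Ifun phi) x (- (x * phi x)).
Proof.
  intros Hc x. unfold Ifun.
  assert (Hc' : forall y, continuous (fun l => l * phi l) y).
  { intros y. apply cont_mult; auto. apply continuous_id. }
  apply (is_derive_RInt' (fun l => l * phi l) (fun a => RInt (fun l => l * phi l) a 1) x 1).
  - apply filter_forall. intros a. apply (RInt_correct (V:=R_CompleteNormedModule)). apply (ex_RInt_continuous (V:=R_CompleteNormedModule)). intros; auto.
  - auto.
Qed.

Lemma I_pos (phi : R -> R) : (forall x, continuous phi x) -> (forall r, 0 <= r <= 1 -> 0 < phi r) ->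
  forall x, 0 <= x < 1 -> 0 < Ifun phi x.
Proof.
  intros Hc Hp x Hx. unfold Ifun. apply RInt_gt_0. lra.
  intros y Hy. apply Rmult_lt_0_compat. lra. apply Hp; lra.
  intros y _. apply cont_mult; auto. apply continuous_id.
Qed.

Lemma Rpower_pos_pow y n z : 0 < y -> Rpower y z ^ n = Rpower y (z * INR n).
Proof.
  intros Hy. rewrite <- Rpower_pow. rewrite Rpower_mult. auto. apply exp_pos.
Qed.

Lemma a_eq gamma phi m x : 0 < phi x ->
  Rpower (phi x) (1 + INR m * (gamma - 1)) * dfun gamma phi x ^ m = phi x * wf phi x ^ m.
Proof.
  intros Hp. unfold dfun, wf, rhobar. rewrite Rpow_mult_distr.
  rewrite Rpower_pos_pow; auto. unfold Rdiv. rewrite Rpow_mult_distr.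
  rewrite pow_inv.
  assert (E : Rpower (phi x) (1 + INR m * (gamma - 1)) * Rpower (phi x) (- gamma * INR m)
              = phi x * / phi x ^ m).
  { rewrite <- Rpower_plus. rewrite <- (Rpower_pow m (phi x)); auto.
    rewrite <- Rpower_Ropp. rewrite <- (Rpower_1 (phi x)) at 2; auto.
    rewrite <- Rpower_plus. f_equal. ring. }
  unfold Ifun. rewrite <- Rmult_assoc, E. ring.
Qed.

Lemma num_eq gamma phi m x : 0 < phi x ->
  Rpower (phi x) (gamma + INR m * (gamma - 1)) * dfun gamma phi x ^ (1 + m) = phi x * wf phi x ^ S m.
Proof.
  intros Hp. rewrite <- (a_eq gamma phi (S m) x Hp). rewrite S_INR. f_equal. f_equal. ring.
Qed.

Lemma ex_derive_wf (phi : R -> R) x : (forall y, continuous phi y) -> ex_derive phi x -> phi x <> 0 ->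
  ex_derive (wf phi) x.
Proof.
  intros Hc Hd Hn. unfold wf, Rdiv. apply ex_derive_mult.
  eexists; apply I_deriv; auto. apply ex_derive_inv; auto.
Qed.

Lemma A_deriv (phi : R -> R) m x : (forall y, continuous phi y) ->
  (forall y, ex_derive phi y) -> (forall y, 0 < x < 1 -> 0 < y < 1 -> phi y <> 0) -> 0 < x < 1 ->
  Derive (fun s => phi s * wf phi s ^ S m) x = vf phi m x * (phi x * wf phi x ^ m).
Proof.
  intros Hc Hd Hn Hx.
  assert (Hpx : phi x <> 0) by auto.
  rewrite (Derive_ext_loc _ (fun s => Ifun phi s * wf phi s ^ m)).
  2:{ generalize (loc_int 0 1 x Hx). apply filter_imp. intros t Ht.
      simpl. unfold wf. field. auto. }
  rewrite Derive_mult. rewrite Derive_pow.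
  rewrite (is_derive_unique _ _ _ (I_deriv phi Hc x)). unfold vf.
  destruct m. simpl. field.
  replace (Ifun phi x) with (phi x * wf phi x) by (unfold wf; field; auto).
  simpl pred. simpl. ring.
  apply ex_derive_wf; auto. eexists; apply I_deriv; auto.
  apply ex_derive_pow, ex_derive_wf; auto.
Qed.

Lemma ex_derive_A (phi : R -> R) m x : (forall y, continuous phi y) ->
  (forall y, ex_derive phi y) -> phi x <> 0 ->
  ex_derive (fun s => phi s * wf phi s ^ m) x.
Proof.
  intros; apply ex_derive_mult; auto. apply ex_derive_pow, ex_derive_wf; auto.
Qed.

Lemma Lm_form gamma (phi : R -> R) m f x : (forall y, continuous phi y) ->
  (forall y, ex_derive phi y) -> (forall y, 0 <= y <= 1 -> 0 < phi y) -> 0 < x < 1 ->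
  ex_derive (Dr f) x ->
  Lm m gamma phi f x = vf phi m x * Dr f x + wf phi x * Derive (Dr f) x.
Proof.
  intros Hc Hd Hp Hx Hf. unfold Lm.
  assert (Hpx : 0 < phi x) by (apply Hp; lra).
  rewrite (Derive_ext_loc _ (fun s => (phi s * wf phi s ^ S m) * Dr f s)).
  2:{ generalize (loc_int 0 1 x Hx). apply filter_imp. intros t Ht.
      unfold rhobar; rewrite (num_eq gamma phi m t); auto. apply Hp; lra. }
  unfold rhobar; rewrite a_eq; auto.
  rewrite Derive_mult; auto. rewrite A_deriv; auto.
  assert (0 < wf phi x). { unfold wf. apply Rdiv_lt_0_compat; auto. apply I_pos; auto; lra. }
  simpl. field. split. apply pow_nonzero; lra. lra.
  intros; apply Rgt_not_eq, Hp; lra.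
  apply ex_derive_A; auto. lra.
Qed.

Lemma Lmstar_form gamma (phi : R -> R) m h x : (forall y, continuous phi y) ->
  (forall y, ex_derive phi y) -> (forall y, 0 <= y <= 1 -> 0 < phi y) -> 0 < x < 1 ->
  ex_derive (Derive h) x ->
  Lmstar m gamma phi h x = vf phi m x * Derive h x + wf phi x * Dr (Derive h) x.
Proof.
  intros Hc Hd Hp Hx Hf. unfold Lmstar.
  assert (Hpx : 0 < phi x) by (apply Hp; lra).
  rewrite (Dr_ext_loc _ (fun s => (phi s * wf phi s ^ S m) * Derive h s)).
  2:{ generalize (loc_int 0 1 x Hx). apply filter_imp. intros t Ht.
      unfold rhobar; rewrite (num_eq gamma phi m t); auto. apply Hp; lra. }
  unfold rhobar; rewrite a_eq; auto.
  rewrite Dr_mult; auto. rewrite A_deriv; auto.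
  assert (0 < wf phi x). { unfold wf. apply Rdiv_lt_0_compat; auto. apply I_pos; auto; lra. }
  simpl. field. split. apply pow_nonzero; lra. lra.
  intros; apply Rgt_not_eq, Hp; lra.
  apply ex_derive_A; auto. lra. lra.
Qed.


Definition opi (i : nat) (F : R -> R) (x : R) : R :=
  if Nat.even i then Dr F x else Derive F x.

Definition sg (i j : nat) : R := if Nat.even j then 0 else if Nat.even i then 1 else -1.

Lemma even_S n : Nat.even (S n) = negb (Nat.even n).
Proof. rewrite Nat.even_succ, <- Nat.negb_even. auto. Qed.

Lemma calD_S_op i f x : calD (S i) f x = opi i (calD i f) x.
Proof. rewrite calD_S. unfold opi. destruct (Nat.even i); auto. Qed.

Lemma opi_ext i F H x : (forall t, 0 < t < 1 -> F t = H t) -> 0 < x < 1 -> opi i F x = opi i H x.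
Proof.
  intros E Hx. unfold opi. destruct (Nat.even i).
  apply Dr_ext_loc. generalize (loc_int 0 1 x Hx); apply filter_imp; auto.
  apply Derive_ext_loc. generalize (loc_int 0 1 x Hx); apply filter_imp; auto.
Qed.

Lemma opi_plus i F H x : ex_derive F x -> ex_derive H x -> x <> 0 ->
  opi i (fun s => F s + H s) x = opi i F x + opi i H x.
Proof.
  intros. unfold opi. destruct (Nat.even i). apply Dr_plus; auto. apply Derive_plus; auto.
Qed.

Lemma opi_mult i Q g x : ex_derive Q x -> ex_derive g x -> x <> 0 ->
  opi i (fun s => Q s * g s) x = Derive Q x * g x + Q x * opi i g x.
Proof.
  intros. unfold opi. destruct (Nat.even i). apply Dr_mult; auto. apply Derive_mult; auto.
Qed.

Lemma opi_sum i n (T : nat -> R -> R) x : x <> 0 ->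
  (forall j, (j < n)%nat -> ex_derive (T j) x) ->
  opi i (fun s => sumf n (fun j => T j s)) x = sumf n (fun j => opi i (T j) x).
Proof.
  intros Hx H. unfold opi. destruct (Nat.even i). apply sumf_Dr; auto. apply sumf_Derive; auto.
Qed.

Lemma opi_calD i j f x : (j < i)%nat -> ex_derive (calD (i - j) f) x -> x <> 0 ->
  opi i (calD (i - j) f) x = calD (S i - j) f x + sg i j * (2 / x) * calD (i - j) f x.
Proof.
  intros Hj He Hx. replace (S i - j)%nat with (S (i - j)) by lia.
  rewrite calD_S. unfold opi, sg.
  rewrite (Nat.even_sub i j) by lia.
  destruct (Nat.even i); destruct (Nat.even j); simpl.
  - ring.
  - rewrite Dr_eq; auto. ring.
  - ring.
  - rewrite Dr_eq; auto. ring.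
Qed.

Lemma Derive_divpow G n x : ex_derive G x -> x <> 0 ->
  Derive (fun s => G s / s ^ n) x = (x * Derive G x - INR n * G x) / x ^ S n.
Proof.
  intros HG Hx. unfold Rdiv. rewrite Derive_mult; auto.
  rewrite Derive_inv. rewrite (Derive_pow (fun s => s)). rewrite Derive_id.
  destruct n. simpl. field. auto.
  simpl pred. rewrite S_INR. simpl. field. split; auto. apply pow_nonzero; auto.
  apply ex_derive_id. apply (ex_derive_pow (fun s => s)), ex_derive_id.
  apply pow_nonzero; auto.
  apply ex_derive_inv. apply (ex_derive_pow (fun s => s)), ex_derive_id. apply pow_nonzero; auto.
Qed.

Lemma ex_derive_divpow G n x : ex_derive G x -> x <> 0 -> ex_derive (fun s => G s / s ^ n) x.
Proof.
  intros. unfold Rdiv. apply ex_derive_mult; auto.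
  apply ex_derive_inv. apply (ex_derive_pow (fun s => s)), ex_derive_id. apply pow_nonzero; auto.
Qed.

Definition goodphi (phi : R -> R) (N : nat) : Prop :=
  (forall y, continuous phi y) /\ (forall y, ex_derive phi y) /\
  (forall y, 0 <= y <= 1 -> 0 < phi y) /\ sm 0 1 N (wf phi).

Lemma sm_vf phi N m : sm 0 1 (S N) (wf phi) -> sm 0 1 N (vf phi m).
Proof.
  intros H. unfold vf. apply sm_plus. apply (sm_ext _ _ _ (fun x => (-1) * x)).
  intros; ring. apply sm_scal, sm_id. apply sm_scal. apply sm_D; auto.
Qed.

Lemma ME gamma phi N m f x : goodphi phi (S (S (S N))) -> sm 0 1 3 f -> 0 < x < 1 ->
  Dr (Lm m gamma phi f) x = Lmstar (S m) gamma phi (Dr f) x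
     + (2 * vf phi m x / x + Derive (vf phi m) x) * Dr f x.
Proof.
  intros [Hc [Hd [Hp Hw]]] Hf Hx.
  assert (Hx0 : x <> 0) by lra.
  assert (HDf : sm 0 1 2 (Dr f)) by (apply sm_Dr; auto; lra).
  assert (Hv : sm 0 1 2 (vf phi m)) by (apply sm_vf; eapply sm_le; [|exact Hw]; lia).
  assert (Hw2 : sm 0 1 2 (wf phi)) by (eapply sm_le; [|exact Hw]; lia).
  rewrite (Dr_ext_loc _ (fun s => vf phi m s * Dr f s + wf phi s * Derive (Dr f) s)).
  2:{ generalize (loc_int 0 1 x Hx); apply filter_imp; intros t Ht.
      apply Lm_form; auto. eapply sm_ex; eauto. }
  rewrite Dr_plus; auto.
  rewrite !Dr_mult; auto.
  rewrite Lmstar_form; auto.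
  rewrite (Dr_eq (Dr f) x); auto. unfold vf. rewrite S_INR. field. auto.
  all: try (eapply sm_ex; eauto; fail).
  apply sm_D in HDf. eapply sm_ex; eauto.
  apply sm_D in HDf. eapply sm_ex; eauto.
  apply ex_derive_mult; eapply sm_ex; eauto.
  apply ex_derive_mult. eapply sm_ex; eauto. apply sm_D in HDf. eapply sm_ex; eauto.
Qed.

Lemma MO gamma phi N m f x : goodphi phi (S (S (S N))) -> sm 0 1 3 f -> 0 < x < 1 ->
  Derive (Lmstar m gamma phi f) x = Lm (S m) gamma phi (Derive f) x
     + (Derive (vf phi m) x - 2 * vf phi m x / x) * Derive f x.
Proof.
  intros [Hc [Hd [Hp Hw]]] Hf Hx.
  assert (Hx0 : x <> 0) by lra.
  assert (Hg : sm 0 1 2 (Derive f)) by (apply sm_D; auto).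
  assert (HDg : sm 0 1 1 (Dr (Derive f))) by (apply sm_Dr; auto; lra).
  assert (Hv : sm 0 1 2 (vf phi m)) by (apply sm_vf; eapply sm_le; [|exact Hw]; lia).
  assert (Hw2 : sm 0 1 2 (wf phi)) by (eapply sm_le; [|exact Hw]; lia).
  rewrite (Derive_ext_loc _ (fun s => vf phi m s * Derive f s + wf phi s * Dr (Derive f) s)).
  2:{ generalize (loc_int 0 1 x Hx); apply filter_imp; intros t Ht.
      apply Lmstar_form; auto. eapply sm_ex; eauto. }
  rewrite Derive_plus.
  rewrite !Derive_mult.
  rewrite Lm_form; auto.
  rewrite (Dr_eq (Derive f) x); auto. unfold vf. rewrite S_INR. field. auto.
  all: try (eapply sm_ex; eauto; fail).
  apply ex_derive_mult; eapply sm_ex; eauto.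
  apply ex_derive_mult; eapply sm_ex; eauto.
Qed.


Definition Mx phi (i : nat) x :=
  x * Derive (vf phi i) x + (if Nat.even i then 2 else -2) * vf phi i x.

Lemma sm_minus a b k f g : sm a b k f -> sm a b k g -> sm a b k (fun x => f x - g x).
Proof.
  intros. apply (sm_ext _ _ _ (fun x => f x + (-1) * g x)). intros; ring.
  apply sm_plus; auto. apply sm_scal; auto.
Qed.

Lemma sm_vf_ab a b phi N m : sm a b (S N) (wf phi) -> sm a b N (vf phi m).
Proof.
  intros H. unfold vf. apply sm_plus. apply (sm_ext _ _ _ (fun x => (-1) * x)).
  intros; ring. apply sm_scal, sm_id. apply sm_scal. apply sm_D; auto.
Qed.

Lemma sm_Mx a b phi N i : sm a b (S (S N)) (wf phi) -> sm a b N (Mx phi i).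
Proof.
  intros H. unfold Mx. apply sm_plus. apply sm_mult. apply sm_id.
  apply sm_D. apply sm_vf_ab; auto. apply sm_scal. apply sm_vf_ab. apply sm_S; auto.
Qed.

Lemma opi_main gamma phi N i X x : goodphi phi (S (S (S N))) -> sm 0 1 3 (calD i X) -> 0 < x < 1 ->
  opi i (calLD i gamma phi X) x = calLD (S i) gamma phi X x + Mx phi i x / x * calD (S i) X x.
Proof.
  intros Hg Hf Hx. unfold opi, calLD, Mx. rewrite even_S. rewrite calD_S.
  destruct (Nat.even i) eqn:E; simpl.
  - rewrite (ME gamma phi N); auto. field. lra.
  - rewrite (MO gamma phi N); auto. field. lra.
Qed.

Lemma ex_derive_calLD gamma phi N i X x : goodphi phi (S (S (S N))) -> sm 0 1 4 (calD i X) -> 0 < x < 1 ->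
  ex_derive (calLD i gamma phi X) x.
Proof.
  intros Hg Hf Hx. pose proof Hg as [Hc [Hd [Hp Hw]]].
  assert (Hv : sm 0 1 2 (vf phi i)) by (apply sm_vf; eapply sm_le; [|exact Hw]; lia).
  assert (Hw2 : sm 0 1 2 (wf phi)) by (eapply sm_le; [|exact Hw]; lia).
  unfold calLD. destruct (Nat.even i).
  - apply (ex_derive_ext_loc (fun s => vf phi i s * Dr (calD i X) s + wf phi s * Derive (Dr (calD i X)) s)).
    generalize (loc_int 0 1 x Hx); apply filter_imp; intros t Ht.
    symmetry; apply Lm_form; auto.
    assert (sm 0 1 3 (Dr (calD i X))) by (apply sm_Dr; auto; lra). eapply sm_ex; eauto.
    assert (sm 0 1 3 (Dr (calD i X))) by (apply sm_Dr; auto; lra).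
    apply (ex_derive_plus (fun s => vf phi i s * Dr (calD i X) s)); apply ex_derive_mult;
      try (eapply sm_ex; eauto; fail). apply sm_D in H. eapply sm_ex; eauto.
  - apply (ex_derive_ext_loc (fun s => vf phi i s * Derive (calD i X) s + wf phi s * Dr (Derive (calD i X)) s)).
    generalize (loc_int 0 1 x Hx); apply filter_imp; intros t Ht.
    symmetry; apply Lmstar_form; auto.
    apply sm_D in Hf. eapply sm_ex; eauto.
    assert (H1 : sm 0 1 3 (Derive (calD i X))) by (apply sm_D; auto).
    assert (H2 : sm 0 1 2 (Dr (Derive (calD i X)))) by (apply sm_Dr; auto; lra).
    apply (ex_derive_plus (fun s => vf phi i s * Derive (calD i X) s)); apply ex_derive_mult;
      try (eapply sm_ex; eauto; fail).
Qed.

Lemma main gamma (phi : R -> R) a b N : a <= 0 -> 1 <= b ->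
  (forall y, continuous phi y) -> (forall y, ex_derive phi y) ->
  (forall y, 0 <= y <= 1 -> 0 < phi y) -> sm a b N (wf phi) ->
  forall i, (i + 3 <= N)%nat -> exists G : nat -> R -> R,
   (forall j, sm a b (N - 2 - i) (G j)) /\ (forall j x, (i <= j)%nat -> G j x = 0) /\
   (forall X, sm 0 1 N X -> forall x, 0 < x < 1 ->
      calD i (Lm 0 gamma phi X) x
      = calLD i gamma phi X x + sumf i (fun j => G j x / x ^ S j * calD (i - j) X x)).
Proof.
  intros Ha Hb Hc Hd Hp Hw i. induction i as [|i IH]; intros HN.
  - exists (fun _ _ => 0). split; [intros; apply sm_const|split; [auto|]].
    intros X HX x Hx. unfold calLD, calD; simpl. rewrite Rplus_0_r; reflexivity.
  - destruct IH as [G [HGs [HG0 HGid]]]; [lia|].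
    exists (fun j x => G j x + match j with O => Mx phi i x
       | S j' => x * Derive (G j') x - INR (S j') * G j' x + 2 * sg i j' * G j' x end).
    assert (HGs' : forall j, sm a b (S (N - 2 - S i)) (G j)).
    { intros j. replace (S (N - 2 - S i)) with (N - 2 - i)%nat by lia. auto. }
    split; [|split].
    + intros [|j].
      * apply sm_plus. apply sm_S; auto. apply sm_Mx.
        eapply sm_le; [|exact Hw]. lia.
      * apply sm_plus. apply sm_S; auto.
        apply sm_plus. apply sm_minus. apply sm_mult. apply sm_id. apply sm_D; auto.
        apply sm_scal; apply sm_S; auto. apply sm_scal; apply sm_S; auto.
    + intros [|j] x Hj; [lia|]. rewrite HG0 by lia.
      rewrite (Derive_ext (G j) (fun _ => 0)) by (intros; apply HG0; lia).
      rewrite Derive_const, HG0 by lia. ring.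
    + intros X HX x Hx.
      assert (Hx0 : x <> 0) by lra.
      assert (HwU : sm 0 1 N (wf phi)) by (eapply sm_sub; [| |exact Hw]; lra).
      assert (Hgood : goodphi phi (S (S (S (N - 3))))).
      { unfold goodphi. replace (S (S (S (N - 3)))) with N by lia. auto. }
      assert (HD : forall m, (m <= N)%nat -> sm 0 1 (N - m) (calD m X)).
      { intros m Hm. apply sm_calD. replace (m + (N - m))%nat with N by lia. auto. }
      assert (HGU : forall j, sm 0 1 2 (G j)).
      { intros j. apply (sm_sub a b); try lra. eapply sm_le; [|apply HGs]. lia. }
      assert (Hterm : forall j, (j < i)%nat ->
        ex_derive (fun s => G j s / s ^ S j * calD (i - j) X s) x).
      { intros j Hj. apply ex_derive_mult. apply ex_derive_divpow; auto.
        apply (sm_ex 0 1 1); auto. eapply (sm_ex _ _ (N - (i - j) - 1)); [|eauto].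
        replace (S (N - (i - j) - 1)) with (N - (i - j))%nat by lia. apply HD; lia. }
      rewrite calD_S_op.
      rewrite (opi_ext i _ (fun s => calLD i gamma phi X s
                  + sumf i (fun j => G j s / s ^ S j * calD (i - j) X s))); auto.
      rewrite opi_plus; auto.
      2:{ apply (ex_derive_calLD gamma phi (N - 3)); auto. eapply sm_le; [|apply HD]; lia. }
      2:{ apply sumf_Derive; auto. }
      rewrite (opi_sum i i (fun j s => G j s / s ^ S j * calD (i - j) X s)); auto.
      rewrite (opi_main gamma phi (N - 3)); auto.
      2:{ eapply sm_le; [|apply HD]; lia. }
      rewrite (sumf_ext i _ (fun j =>
          G j x / x ^ S j * calD (S i - j) X x +
          ((x * Derive (G j) x - INR (S j) * G j x) / x ^ S (S j) + sg i j * (2 / x) * (G j x / x ^ S j))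
             * calD (i - j) X x)).
      2:{ intros j Hj. rewrite opi_mult; auto.
          rewrite Derive_divpow; auto. rewrite opi_calD; auto. ring.
          eapply (sm_ex _ _ (N - (i - j) - 1)); [|eauto].
          replace (S (N - (i - j) - 1)) with (N - (i - j))%nat by lia. apply HD; lia.
          apply (sm_ex 0 1 1); auto.
          apply ex_derive_divpow; auto. apply (sm_ex 0 1 1); auto.
          eapply (sm_ex _ _ (N - (i - j) - 1)); [|eauto].
          replace (S (N - (i - j) - 1)) with (N - (i - j))%nat by lia. apply HD; lia. }
      rewrite sumf_plus.
      assert (HA : sumf i (fun j => G j x / x ^ S j * calD (S i - j) X x)
                 = G 0%nat x / x ^ 1 * calD (S i) X x
                   + sumf i (fun j => G (S j) x / x ^ S (S j) * calD (i - j) X x)).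
      { transitivity (sumf (S i) (fun j => G j x / x ^ S j * calD (S i - j) X x)).
        simpl. rewrite (HG0 i x) by lia. unfold Rdiv. rewrite !Rmult_0_l, Rplus_0_r. reflexivity.
        rewrite sumf_shift. reflexivity. }
      rewrite HA. rewrite sumf_shift.
      rewrite (sumf_ext i (fun j => (G (S j) x + match S j with O => Mx phi i x
       | S j' => x * Derive (G j') x - INR (S j') * G j' x + 2 * sg i j' * G j' x end)
         / x ^ S (S j) * calD (S i - S j) X x)
         (fun j => G (S j) x / x ^ S (S j) * calD (i - j) X x +
           ((x * Derive (G j) x - INR (S j) * G j x) / x ^ S (S j) + sg i j * (2 / x) * (G j x / x ^ S j))
             * calD (i - j) X x)).
      2:{ intros j Hj. replace (S i - S j)%nat with (i - j)%nat by lia. simpl. field.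
          split; auto. apply pow_nonzero; auto. }
      rewrite sumf_plus. simpl (S i - 0)%nat. field. auto.
Qed.


Lemma Ck_sm N (f : R -> R) a b : Ck N f -> sm a b N f.
Proof.
  intros [H1 H2].
  assert (K : forall k n, (n + k = N)%nat -> sm a b k (Derive_n f n)).
  { induction k as [|k IH]; intros n Hn.
    - simpl. intros x _. rewrite Nat.add_0_r in Hn. subst. apply H2.
    - simpl. split.
      + intros x _. apply (H1 (S n) x). lia.
      + apply (IH (S n)). lia. }
  apply (K N 0%nat). lia.
Qed.

Lemma phi_V (phi : R -> R) : (forall y, continuous phi y) -> (forall r, 0 <= r <= 1 -> 0 < phi r) ->
  exists e, 0 < e /\ forall y, -e < y < 1 + e -> 0 < phi y.
Proof.
  intros Hc Hp.
  assert (L0 : locally 0 (fun y => 0 < phi y < phi 0 + 1)).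
  { pose proof (Hc 0) as C; unfold continuous, filterlim, filter_le, filtermap in C; apply (C (fun t => 0 < t < phi 0 + 1)). apply loc_int. pose proof (Hp 0). lra. }
  assert (L1 : locally 1 (fun y => 0 < phi y < phi 1 + 1)).
  { pose proof (Hc 1) as C; unfold continuous, filterlim, filter_le, filtermap in C; apply (C (fun t => 0 < t < phi 1 + 1)). apply loc_int. pose proof (Hp 1). lra. }
  destruct L0 as [e0 He0]. destruct L1 as [e1 He1].
  exists (Rmin e0 e1). split. apply Rmin_case; apply cond_pos.
  intros y Hy. pose proof (Rmin_l e0 e1). pose proof (Rmin_r e0 e1).
  destruct (Rlt_le_dec y 0).
  - apply He0. change (Rabs (y - 0) < e0). rewrite Rabs_left; lra.
  - destruct (Rle_lt_dec y 1).
    + apply Hp; lra.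
    + apply He1. change (Rabs (y - 1) < e1). rewrite Rabs_right; lra.
Qed.

Lemma sm0_of_ex a b (f : R -> R) : (forall x, a < x < b -> ex_derive f x) -> sm a b 0 f.
Proof.
  simpl. intros H x Hx. apply (ex_derive_continuous (K:=R_AbsRing) (V:=R_NormedModule)); auto.
Qed.

Lemma sm_I (phi : R -> R) a b k : (forall x, continuous phi x) -> sm a b k phi -> sm a b (S k) (Ifun phi).
Proof.
  intros Hc H. split.
  - intros x _. eexists; apply I_deriv; auto.
  - apply (sm_ext _ _ _ (fun x => (-1) * (x * phi x))).
    intros x _. rewrite (is_derive_unique _ _ _ (I_deriv phi Hc x)). ring.
    apply sm_scal, sm_mult; auto. apply sm_id.
Qed.

Definition Efun gamma (phi : R -> R) x := Rpower (phi x) (- gamma).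
Definition D1 gamma (phi : R -> R) x :=
  - gamma * (Derive phi x / phi x) * Efun gamma phi x * Ifun phi x
  + Efun gamma phi x * (- (x * phi x)).

Lemma E_deriv gamma (phi : R -> R) x : 0 < phi x -> ex_derive phi x ->
  is_derive (Efun gamma phi) x (- gamma * (Derive phi x / phi x) * Efun gamma phi x).
Proof.
  intros Hp Hd. unfold Efun, Rpower. auto_derive. auto.
  rewrite Rmult_1_l. reflexivity.
Qed.

Lemma d_deriv gamma (phi : R -> R) x : (forall y, continuous phi y) -> 0 < phi x -> ex_derive phi x ->
  is_derive (dfun gamma phi) x (D1 gamma phi x).
Proof.
  intros Hc Hp Hd.
  pose proof (is_derive_mult (Efun gamma phi) (Ifun phi) x _ _ (E_deriv gamma phi x Hp Hd)
     (I_deriv phi Hc x) Rmult_comm) as H.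
  unfold D1. exact H.
Qed.

Lemma cont_inv (f : R -> R) x : continuous f x -> f x <> 0 -> continuous (fun y => / f y) x.
Proof.
  intros. apply (continuous_comp f Rinv). auto.
  apply continuity_pt_filterlim. apply continuity_pt_inv; auto.
  apply derivable_continuous_pt, derivable_pt_id.
Qed.

Lemma bound01 (h : R -> R) : (forall x, 0 <= x <= 1 -> continuous h x) ->
  exists M, forall r, 0 <= r <= 1 -> Rabs (h r) <= M.
Proof.
  intros H. destruct (continuity_ab_maj (fun r => Rabs (h r)) 0 1) as [m [Hm _]].
  lra. intros c Hc. apply continuity_pt_filterlim. apply continuous_Rabs_comp. auto.
  exists (Rabs (h m)). auto.
Qed.


Theorem lemmaA2 :
  forall gamma : R, 1 < gamma ->
  forall i : nat, (1 <= i)%nat ->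
  exists N : nat,
  forall phi : R -> R,
    Ck N phi ->
    (forall r, 0 <= r <= 1 -> 0 < phi r) ->
    Derive phi 0 = 0 ->
    exists c : nat -> nat -> nat -> nat -> R -> R,
      (forall j k l, exists M : R, forall r, 0 <= r <= 1 -> Rabs (c i j k l r) <= M) /\
      (forall X : R -> R, Ck N X ->
        forall r, 0 < r < 1 ->
          calD i (Lm 0 gamma phi X) r
          = calLD i gamma phi X r
            + sum_n_m (fun j => qij c gamma phi i j r * calD (i - j) X r) 0 (i - 1)).
Proof.
  intros gamma Hg i Hi. exists (i + 3)%nat. intros phi Hphi Hp Hd0.
  assert (Hsm : forall a b, sm a b (i + 3) phi) by (intros; apply Ck_sm; auto).
  assert (Hd : forall y, ex_derive phi y).
  { intros y. destruct Hphi as [H1 _]. apply (H1 1%nat y). lia. }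
  assert (Hc : forall y, continuous phi y).
  { intros y. apply (ex_derive_continuous (K:=R_AbsRing) (V:=R_NormedModule)); auto. }
  destruct (phi_V phi Hc Hp) as [e [He HV]].
  assert (HwV : sm (-e) (1 + e) (i + 3) (wf phi)).
  { apply (sm_ext _ _ _ (fun x => Ifun phi x * / phi x)). intros; reflexivity.
    apply sm_mult. apply sm_S, sm_I; auto. apply sm_inv; auto.
    intros x Hx; apply Rgt_not_eq, HV; auto. }
  destruct (main gamma phi (-e) (1 + e) (i + 3) ltac:(lra) ltac:(lra) Hc Hd Hp HwV i ltac:(lia))
    as [G [HGs [HG0 HGid]]].
  set (Sd := fun r => dfun gamma phi r ^ 2 + D1 gamma phi r ^ 2).
  assert (HSd : forall r, 0 <= r <= 1 -> Sd r <> 0).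
  { intros r Hr. unfold Sd. apply Rgt_not_eq.
    assert (HE : 0 < Efun gamma phi r) by (unfold Efun, Rpower; apply exp_pos).
    destruct (Rlt_le_dec r 1).
    - assert (0 < dfun gamma phi r).
      { change (0 < Efun gamma phi r * Ifun phi r). apply Rmult_lt_0_compat; auto.
        apply I_pos; auto; lra. }
      pose proof (pow2_ge_0 (D1 gamma phi r)). simpl. nra.
    - assert (r = 1) by lra. subst r.
      assert (HI : Ifun phi 1 = 0) by (unfold Ifun; apply (RInt_point (V:=R_CompleteNormedModule))).
      assert (D1 gamma phi 1 < 0).
      { unfold D1. rewrite HI. pose proof (Hp 1 ltac:(lra)). rewrite Rmult_0_r, Rplus_0_l.
        nra. }
      pose proof (pow2_ge_0 (dfun gamma phi 1)). simpl. nra. }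
  assert (HVx : forall x, 0 <= x <= 1 -> -e < x < 1 + e) by (intros; lra).
  assert (HD1 : sm (-e) (1 + e) 0 (D1 gamma phi)).
  { assert (HE : sm (-e) (1 + e) 0 (Efun gamma phi)).
    { apply sm0_of_ex. intros x Hx. eexists; apply E_deriv; auto. }
    assert (HI : sm (-e) (1 + e) 0 (Ifun phi)).
    { apply (sm_le _ _ _ (S (i + 3))). lia. apply sm_I; auto. }
    unfold D1. apply sm_plus.
    - apply sm_mult; auto. apply sm_mult; auto. apply sm_scal.
      unfold Rdiv. apply sm_mult.
      + apply (sm_le _ _ _ (i + 2)). lia. apply sm_D. replace (S (i + 2)) with (i + 3)%nat by lia. auto.
      + apply sm_inv. intros x Hx; apply Rgt_not_eq, HV; auto. apply (sm_le _ _ _ (i + 3)); auto. lia.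
    - apply sm_mult; auto. apply (sm_ext _ _ _ (fun x => (-1) * (x * phi x))). intros; ring.
      apply sm_scal, sm_mult. apply sm_id. apply (sm_le _ _ _ (i + 3)); auto. lia. }
  assert (Hdc : forall x, 0 <= x <= 1 -> continuous (dfun gamma phi) x).
  { intros x Hx. apply (ex_derive_continuous (K:=R_AbsRing) (V:=R_NormedModule)).
    eexists; apply d_deriv; auto. }
  assert (HSc : forall x, 0 <= x <= 1 -> continuous Sd x).
  { intros x Hx. unfold Sd. simpl.
    assert (continuous (D1 gamma phi) x) by (apply (sm_cont (-e) (1+e) 0); auto).
    apply cont_plus; apply cont_mult; auto; apply cont_mult; auto; apply continuous_const. }
  assert (HGc : forall j x, 0 <= x <= 1 -> continuous (G j) x).
  { intros j x Hx. apply (sm_cont (-e) (1+e) (i + 3 - 2 - i)); auto. }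
  exists (fun (_ j k l : nat) (r : R) => match k, l with
     | 1%nat, 0%nat => G j r * dfun gamma phi r / Sd r
     | 1%nat, 1%nat => G j r * D1 gamma phi r / Sd r
     | _, _ => 0 end).
  split.
  - intros j k l.
    destruct k as [|[|k]]; try (exists 0; intros; rewrite Rabs_R0; lra).
    destruct l as [|[|l]]; try (exists 0; intros; rewrite Rabs_R0; lra).
    + apply (bound01 (fun r => G j r * dfun gamma phi r / Sd r)). intros x Hx.
      unfold Rdiv. apply cont_mult. apply cont_mult; auto. apply cont_inv; auto.
    + apply (bound01 (fun r => G j r * D1 gamma phi r / Sd r)). intros x Hx.
      unfold Rdiv. apply cont_mult. apply cont_mult; [auto | apply (sm_cont (-e) (1+e) 0); auto].
      apply cont_inv; auto.
  - intros X HX r Hr.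
    rewrite HGid; [|apply Ck_sm; auto|auto]. f_equal.
    rewrite sum_n_m_sumf. replace (S (i - 1)) with i by lia.
    apply sumf_ext. intros j Hj. f_equal.
    unfold qij. rewrite sum_Sn_m by lia.
    rewrite (sum_n_m_ext_loc _ (fun _ => zero) 2 (2 + j)).
    2:{ intros k Hk. destruct k as [|[|k]]; try lia.
        rewrite (sum_n_m_ext _ (fun _ => zero)). rewrite sum_n_m_const_zero.
        unfold zero; simpl. unfold Rdiv. ring.
        intros l. unfold zero; simpl. ring. }
    rewrite sum_n_m_const_zero.
    rewrite sum_n_Sm by lia. rewrite sum_n_n. simpl Derive_n.
    replace (Derive (fun x => dfun gamma phi x) r) with (D1 gamma phi r)
      by (symmetry; apply is_derive_unique; apply d_deriv; auto; apply Hp; lra).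
    replace (2 + j - 1)%nat with (S j) by lia.
    unfold plus, zero; simpl.
    assert (Sd r <> 0) by (apply HSd; lra).
    unfold Sd in *. rewrite Rplus_0_r. assert (r * r ^ j <> 0) by (apply Rmult_integral_contrapositive; split; [lra|apply pow_nonzero; lra]). field. split; [auto|split; [apply pow_nonzero|]; lra].
Qed.
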